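(* Let $\mu, z \in \mathcal{X}$ and let $P_X$ be a probability distribution on $\mathcal{X}$. The influence function $IF(z; D, \mu, P_X) := \lim_{\varepsilon \downarrow 0} \frac{D(\mu; (1 - \varepsilon) P_X + \varepsilon \delta_z) - D(\mu; P_X)}{\varepsilon}$ exists and equals $IF(z; D, \mu, P_X) = 2 - 2 D(\mu; P_X) - \mathrm{E} \{ h(X, z, \mu) \}$, where $X \sim P_X$. Moreover, $\sup_{z \in \mathcal{X}} | IF(z; D, \mu, P_X) | \leq 4$.
   Context: $(\mathcal{X}, d)$ is a complete separable metric space with its Borel $\sigma$-algebra. Define $h: \mathcal{X}^3 \to \mathbb{R}$ by $h(x_1, x_2, x_3) := \mathbb{I}( x_3 \notin \{x_1, x_2\} ) \dfrac{ d^2(x_1, x_3) + d^2(x_2, x_3) - d^2(x_1, x_2) }{d(x_1, x_3)\, d(x_2, x_3) }$, where $h := 0$ when $x_3 \in \{x_1,x_2\}$. The metric spatial depth of $\mu \in \mathcal{X}$ with respect to a probability distribution $P_X$ on $\mathcal{X}$ is $D(\mu; P_X) := 1 - \frac{1}{2} \mathrm{E} \{ h(X_1, X_2, \mu) \}$, where $X_1, X_2 \sim P_X$ are independent. $\delta_z$ denotes the Dirac point mass at $z$, and $(1-\varepsilon)P_X + \varepsilon\delta_z$ the corresponding mixture distribution. *)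

(* Defs.v *)
From HB Require Import structures.
From mathcomp Require Import all_boot all_order all_algebra.
From mathcomp Require Import all_classical all_reals all_analysis.
Set Implicit Arguments. Unset Strict Implicit. Unset Printing Implicit Defensive.
Import Order.TTheory GRing.Theory Num.Theory.
Import numFieldNormedType.Exports.
Local Open Scope classical_set_scope.
Local Open Scope ring_scope.

Section MetricSpatialDepth.
Context {R : realType} {dX : measure_display} {X : measurableType dX}.
Variable dist : X -> X -> R.

Definition is_metric : Prop :=
  [/\ forall x y, dist x y = 0 <-> x = y,
      forall x y, dist x y = dist y x &
      forall x y w, dist x w <= dist x y + dist y w].

Definition metric_complete : Prop :=
  forall u : nat -> X,
    (forall e, 0 < e -> exists N, forall m n, (N <= m)%N -> (N <= n)%N ->
        dist (u m) (u n) < e) ->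
    exists l, forall e, 0 < e -> exists N, forall n, (N <= n)%N -> dist (u n) l < e.

Definition metric_separable : Prop :=
  exists u : nat -> X, forall x e, 0 < e -> exists n, dist x (u n) < e.

Definition metric_open (A : set X) : Prop :=
  forall x, A x -> exists r, 0 < r /\ [set y | dist x y < r] `<=` A.

Definition metric_borel : Prop :=
  @measurable dX X = <<s setT, metric_open >>.

Definition hker (x1 x2 x3 : X) : R :=
  if pselect (x3 = x1 \/ x3 = x2) then 0
  else (dist x1 x3 ^+ 2 + dist x2 x3 ^+ 2 - dist x1 x2 ^+ 2)
         / (dist x1 x3 * dist x2 x3).

Definition depth (mu : X) (Q : set X -> \bar R) : R :=
  1 - 2^-1 * fine (\int[(Q \x Q)%E]_p (hker p.1 p.2 mu)%:E)%E.

Definition Eh_z (Q : set X -> \bar R) (z mu : X) : R :=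
  fine (\int[Q]_x (hker x z mu)%:E)%E.

Definition mixture (Q : set X -> \bar R) (z : X) (eps : R) : set X -> \bar R :=
  fun A => ((1 - eps)%:E * Q A + eps%:E * @dirac _ X z R A)%E.

Definition IF_quotient (mu : X) (Q : set X -> \bar R) (z : X) (eps : R) : R :=
  (depth mu (mixture Q z eps) - depth mu Q) / eps.

Definition influence (mu : X) (Q : set X -> \bar R) (z : X) : R :=
  lim (IF_quotient mu Q z @ 0^'+).

End MetricSpatialDepth.

(* Main.v *)
Require Import Defs.
From HB Require Import structures.
From mathcomp Require Import all_boot all_order all_algebra.
From mathcomp Require Import all_classical all_reals all_analysis.
From mathcomp Require Import measurable_realfun.
From mathcomp Require Import ring lra.
Import Order.TTheory GRing.Theory Num.Theory.
Import numFieldNormedType.Exports.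
Local Open Scope classical_set_scope.
Local Open Scope ring_scope.

Section metric.
Context {R : realType} {dX : measure_display} {X : measurableType dX}.
Context (dist : X -> X -> R) (Hm : is_metric dist) (Hsep : metric_separable dist)
  (Hb : metric_borel dist).

Lemma dist_ge0 x y : 0 <= dist x y.
Proof.
case: Hm => H0 Hs Ht.
have := Ht x y x; rewrite (proj2 (H0 x x) erefl) Hs.
by move=> h; rewrite -(@pmulr_rge0 _ 2)// mulr2n mulrDl mul1r.
Qed.

Lemma ball_measurable x r : measurable [set y | dist x y < r].
Proof.
rewrite Hb; apply: sub_sigma_algebra => y /= hy.
case: Hm => H0 Hs Ht.
exists (r - dist x y); split; first by rewrite subr_gt0.
move=> w /= hw; apply: (le_lt_trans (Ht x y w)).
by rewrite -ltrBrDl.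
Qed.

Lemma measurable_dist_l x : measurable_fun setT (fun y => dist y x).
Proof.
apply: (measurability _ (RGenInftyO.measurableE R)) => //.
move=> /= _ [_ [r ->] <-]; rewrite setTI.
have -> : (fun y => dist y x) @^-1` `]-oo, r[ = [set y | dist x y < r].
  apply/seteqP; split => y /=; rewrite in_itv /=; case: Hm => _ Hs _;
    by rewrite Hs.
exact: ball_measurable.
Qed.

Lemma measurable_dist : measurable_fun setT (fun p : X * X => dist p.1 p.2).
Proof.
case: Hsep => u Hu.
apply: (measurability _ (RGenInftyO.measurableE R)) => //.
move=> /= _ [_ [r ->] <-]; rewrite setTI.
have -> : (fun p : X * X => dist p.1 p.2) @^-1` `]-oo, r[ =
  \bigcup_n \bigcup_k ([set x | dist (u n) x < k.+1%:R^-1] `*`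
                       [set y | dist (u n) y < r - k.+1%:R^-1]).
  case: Hm => H0 Hs Ht.
  apply/seteqP; split => -[x y] /=; rewrite in_itv /=.
  - move=> hd.
    have hdl : 0 < (r - dist x y) / 2 by rewrite divr_gt0// subr_gt0.
    have [k hk] : exists k : nat, k.+1%:R^-1 < (r - dist x y) / 2.
      have [N _ hN] := near_infty_natSinv_lt (PosNum hdl).
      by exists N; apply: hN => /=.
    have [n hn] := Hu x (k.+1%:R^-1) ltac:(by []).
    exists n => //; exists k => //; split => /=; first by rewrite Hs.
    apply: (le_lt_trans (Ht (u n) x y)); rewrite Hs.
    set e := k.+1%:R^-1 in hk hn *.
    have : dist x (u n) + dist x y < r - e.
      by move: hk; rewrite ltr_pdivlMr// => hk; rewrite ltrBrDr; lra.
    by [].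
  - move=> [n _ [k _ [/= h1 h2]]].
    apply: (le_lt_trans (Ht x (u n) y)); rewrite (Hs x).
    by have := ltrD h1 h2; rewrite addrCA subrr addr0.
apply: bigcupT_measurable => n; apply: bigcupT_measurable => k.
by apply: measurableX; exact: ball_measurable.
Qed.

Lemma dist_xx x : dist x x = 0.
Proof. by case: Hm => H0 _ _; exact: (proj2 (H0 x x) erefl). Qed.

Lemma hkerE x1 x2 mu : hker dist x1 x2 mu =
  (dist x1 mu ^+ 2 + dist x2 mu ^+ 2 - dist x1 x2 ^+ 2) / (dist x1 mu * dist x2 mu).
Proof.
rewrite /hker; case: pselect => [[e|e] /=|]//; by rewrite -e dist_xx ?mul0r ?mulr0 invr0 mulr0.
Qed.

Lemma hker_bound x1 x2 mu : `|hker dist x1 x2 mu| <= 2.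
Proof.
rewrite /hker; case: pselect => [h /=|h /=]; first by rewrite normr0.
move: h => /not_orP [h1 h2].
case: Hm => H0 Hs Ht.
have a0 : 0 < dist x1 mu.
  by rewrite lt0r dist_ge0 andbT; apply/eqP => /H0 /esym.
have b0 : 0 < dist x2 mu.
  by rewrite lt0r dist_ge0 andbT; apply/eqP => /H0 /esym.
set a := dist x1 mu in a0 *; set b := dist x2 mu in b0 *; set c := dist x1 x2.
have c0 : 0 <= c by exact: dist_ge0.
have hc1 : c <= a + b by rewrite /c /a /b (Hs x2); exact: Ht.
have hc2 : a <= c + b by rewrite /c /a /b; exact: Ht.
have hc3 : b <= c + a by rewrite /c /a /b (Hs x1) ; exact: Ht.
have ab0 : 0 < a * b by exact: mulr_gt0.
rewrite ler_norml; apply/andP; split.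
  by rewrite ler_pdivlMr//; nra.
by rewrite ler_pdivrMr//; nra.
Qed.

Lemma measurable_inv : measurable_fun setT (@GRing.inv R).
Proof.
have -> : (@GRing.inv R) = fun x : R => if x == 0 then 0 else x^-1.
  by apply/funext => x; case: eqP => // ->; rewrite invr0.
apply: measurable_fun_if => //.
- exact: measurable_fun_eqr.
have -> : setT `&` (fun x : R => x == 0) @^-1` [set false] = [set x | x != 0].
  by apply/seteqP; split => x /=; [case=> _ /negbT|move=> /negbTE h; split].
apply: open_continuous_measurable_fun; first exact: open_neq.
by move=> x; rewrite inE => hx; exact: inv_continuous.
Qed.

Lemma measurable_hker2 mu : measurable_fun setT (fun p : X * X => hker dist p.1 p.2 mu).
Proof.
have -> : (fun p : X * X => hker dist p.1 p.2 mu) = fun p =>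
  (dist p.1 mu ^+ 2 + dist p.2 mu ^+ 2 - dist p.1 p.2 ^+ 2) * (dist p.1 mu * dist p.2 mu)^-1.
  by apply/funext => p; rewrite hkerE.
have m1 : measurable_fun setT (fun p : X * X => dist p.1 mu).
  exact: (measurableT_comp (measurable_dist_l mu) measurable_fst).
have m2 : measurable_fun setT (fun p : X * X => dist p.2 mu).
  exact: (measurableT_comp (measurable_dist_l mu) measurable_snd).
apply: measurable_funM.
  apply: measurable_funB; first apply: measurable_funD; apply: measurable_funX => //.
  exact: measurable_dist.
apply: (measurableT_comp measurable_inv).
exact: measurable_funM.
Qed.

Lemma measurable_hker1 z mu : measurable_fun setT (fun x => hker dist x z mu).
Proof.
have -> : (fun x => hker dist x z mu) = fun x =>
  (dist x mu ^+ 2 + dist z mu ^+ 2 - dist x z ^+ 2) * (dist x mu * dist z mu)^-1.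
  by apply/funext => p; rewrite hkerE.
apply: measurable_funM.
  apply: measurable_funB; first apply: measurable_funD; apply: measurable_funX => //;
  try exact: measurable_dist_l.
apply: (measurableT_comp measurable_inv).
apply: measurable_funM => //; exact: measurable_dist_l.
Qed.

End metric.

Section shift.
Context {R : realType} {d : measure_display} {T : measurableType d}.

Lemma shift_int (m : {measure set T -> \bar R}) (c : R) (hm : m setT = c%:E)
  (f : T -> R) (mf : measurable_fun setT f) (bf : forall x, `|f x| <= 2) :
  fine (\int[m]_x (f x)%:E) = fine (\int[m]_x (f x + 2)%:E) - 2 * c.
Proof.
have mfin : (m setT < +oo)%E by rewrite hm ltry.
have i1 : m.-integrable setT (EFin \o f).
  apply: measurable_bounded_integrable => //; exists 2; split => // M hM x _ /=.
  exact: le_trans (bf x) (ltW hM).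
have i2 : m.-integrable setT (EFin \o cst 2).
  apply: measurable_bounded_integrable => //; exists 2; split => // M hM x _ /=.
  by rewrite ger0_norm// ltW.
have := integralD_EFin measurableT i1 i2.
rewrite /= => ->; rewrite integral_cst// hm.
have : (\int[m]_x (f x)%:E)%E \is a fin_num by exact: integrable_fin_num.
move/fineK => <-; rewrite -EFinM -EFinD /=; lra.
Qed.

End shift.

Section mix.
Context {R : realType} {dX : measure_display} {X : measurableType dX}.
Context (P : probability X R) (z : X) (a b : {nonneg R}).
Definition mixm := measure_add (mscale a P) (mscale b (@dirac _ X z R)).
HB.instance Definition _ := Measure.on mixm.
Let fin : fin_num_fun mixm.
Proof.
move=> A mA; rewrite /mixm measure_addE /mscale /= fin_numD; apply/andP; split.
  by rewrite fin_numM// fin_num_measure.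
by rewrite fin_numM// /dirac; case: (_ \in _).
Qed.
HB.instance Definition _ := Measure_isFinite.Build _ _ _ mixm fin.

Lemma mixmT : mixm setT = (a%:num + b%:num)%:E.
Proof.
rewrite /mixm measure_addE.
change ((a%:num)%:E * P setT + (b%:num)%:E * \d_z setT = (a%:num + b%:num)%:E)%E.
by rewrite probability_setT diracT !mule1.
Qed.

Lemma int_mix (f : X -> \bar R) : (forall x, 0 <= f x)%E -> measurable_fun setT f ->
  (\int[mixm]_x f x = a%:num%:E * \int[P]_x f x + b%:num%:E * f z)%E.
Proof.
move=> f0 mf; rewrite /mixm ge0_integral_measure_add// !ge0_integral_mscale//.
by rewrite integral_dirac// diracT mul1e.
Qed.
End mix.

Section main.
Context {R : realType} {dX : measure_display} {X : measurableType dX}.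
Context (dist : X -> X -> R) (Hm : is_metric dist) (Hsep : metric_separable dist)
  (Hb : metric_borel dist).
Context (P : probability X R) (z mu : X).

Let PT : P [set: X] = 1%E.
Proof. exact: probability_setT. Qed.

Let g2 (p : X * X) := (hker dist p.1 p.2 mu + 2)%:E.
Let g1 (x : X) := (hker dist x z mu + 2)%:E.

Let hb x1 x2 : -2 <= hker dist x1 x2 mu <= 2.
Proof. by rewrite -ler_norml; exact: hker_bound. Qed.

Let g2_ge0 p : (0 <= g2 p)%E.
Proof. by rewrite lee_fin; have /andP[h _] := hb p.1 p.2; lra. Qed.
Let g1_ge0 x : (0 <= g1 x)%E.
Proof. by rewrite lee_fin; have /andP[h _] := hb x z; lra. Qed.

Let mg2 : measurable_fun setT g2.
Proof.
apply/measurable_EFinP; apply: measurable_funD => //; exact: measurable_hker2.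
Qed.
Let mg1 : measurable_fun setT g1.
Proof.
apply/measurable_EFinP; apply: measurable_funD => //; exact: measurable_hker1.
Qed.

Let hsym x y : hker dist x y mu = hker dist y x mu.
Proof.
case: Hm => _ Hs _.
by rewrite !hkerE// (Hs x y) (addrC (dist x mu ^+ 2)) (mulrC (dist x mu)).
Qed.

Let g2z x : g2 (x, z) = g1 x. Proof. by []. Qed.
Let g2z' y : g2 (z, y) = g1 y. Proof. by rewrite /g2 /g1 /= hsym. Qed.

Definition TT := (\int[(P \x P)%E]_p g2 p)%E.
Definition SS := (\int[P]_x g1 x)%E.

Lemma TT_bnd : (0 <= TT <= 4%:E)%E.
Proof.
apply/andP; split; first by apply: integral_ge0 => p _.
apply: (@le_trans _ _ (\int[(P \x P)%E]_p (cst 4%:E) p)%E).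
  apply: ge0_le_integral => // p _; rewrite lee_fin; have /andP[_ h] := hb p.1 p.2; lra.
rewrite integral_cst//= -setXTT product_measure1E//.
by change (4%:E * (P setT * P setT) <= 4%:E)%E; rewrite PT !mule1.
Qed.

Lemma SS_bnd : (0 <= SS <= 4%:E)%E.
Proof.
apply/andP; split; first by apply: integral_ge0 => p _.
apply: (@le_trans _ _ (\int[P]_p (cst 4%:E) p)%E).
  apply: ge0_le_integral => // p _; rewrite lee_fin; have /andP[_ h] := hb p z; lra.
by rewrite integral_cst//; change (4%:E * P setT <= 4%:E)%E; rewrite PT mule1.
Qed.


Lemma TT_fin : TT = (fine TT)%:E.
Proof. have /andP[h1 h2] := TT_bnd; by rewrite fineK// ge0_fin_numE// (le_lt_trans h2) ?ltry. Qed.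
Lemma SS_fin : SS = (fine SS)%:E.
Proof. have /andP[h1 h2] := SS_bnd; by rewrite fineK// ge0_fin_numE// (le_lt_trans h2) ?ltry. Qed.

Lemma tonelli_mix (a b : {nonneg R}) :
  (\int[(mixm P z a b \x mixm P z a b)]_p g2 p =
   (a%:num ^+ 2 * fine TT + 2 * a%:num * b%:num * fine SS
    + b%:num ^+ 2 * (hker dist z z mu + 2))%:E)%E.
Proof.
set M := mixm P z a b.
rewrite (fubini_tonelli1 _ mg2 g2_ge0).
have mg2x x : measurable_fun setT (fun y => g2 (x, y)) by exact: measurable_fun_pair2.
have FE x : fubini_F M g2 x = (a%:num%:E * fubini_F P g2 x + b%:num%:E * g1 x)%E.
  by rewrite /fubini_F int_mix.
have mF0 : measurable_fun setT (fubini_F P g2) := measurable_fun_fubini_tonelli_F _ mg2 g2_ge0.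
have F0ge0 x : (0 <= fubini_F P g2 x)%E by apply: integral_ge0 => y _.
rewrite int_mix; last 2 first.
- by move=> x; apply: integral_ge0 => y _.
- exact: measurable_fun_fubini_tonelli_F.
under eq_integral do rewrite FE.
rewrite ge0_integralD//; last 4 first.
- by move=> x _; apply: mule_ge0.
- exact: measurable_funeM.
- by move=> x _; apply: mule_ge0.
- exact: measurable_funeM.
rewrite ge0_integralZl// ge0_integralZl//.
rewrite -(fubini_tonelli1 _ mg2 g2_ge0) -/TT -/SS.
rewrite FE /fubini_F.
under eq_integral do rewrite g2z'.
rewrite -/SS TT_fin SS_fin /g1 -!EFinM -!EFinD; congr EFin; ring.
Qed.


Let PPT : ((P \x P)%E setT = 1%:E)%E.
Proof.
rewrite -setXTT product_measure1E//.
by change (P setT * P setT = 1%:E)%E; rewrite PT mule1.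
Qed.

Lemma depthP : depth dist mu P = 1 - 2^-1 * (fine TT - 2).
Proof.
rewrite /depth (shift_int _ _ PPT) ?mulr1//; first exact: measurable_hker2.
by move=> p; exact: hker_bound.
Qed.

Lemma EhP : Eh_z dist P z mu = fine SS - 2.
Proof.
rewrite /Eh_z (shift_int _ _ PT) ?mulr1//; first exact: measurable_hker1.
by move=> p; exact: hker_bound.
Qed.

Lemma depth_mix (e : R) : 0 <= e -> e <= 1 ->
  depth dist mu (mixture P z e) = 1 - 2^-1 * ((1 - e) ^+ 2 * fine TT
    + 2 * (1 - e) * e * fine SS + e ^+ 2 * (hker dist z z mu + 2) - 2).
Proof.
move=> e0 e1.
have e1' : 0 <= 1 - e by rewrite subr_ge0.
have -> : mixture P z e = mixm P z (NngNum e1') (NngNum e0).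
  by apply/funext => A; rewrite /mixture /mixm measure_addE.
have MT : ((mixm P z (NngNum e1') (NngNum e0) \x mixm P z (NngNum e1') (NngNum e0))%E setT = 1%:E)%E.
  rewrite -setXTT product_measure1E//.
  change (mixm P z (NngNum e1') (NngNum e0) setT * mixm P z (NngNum e1') (NngNum e0) setT = 1%:E)%E.
  rewrite mixmT /= -EFinM; congr EFin.
  by rewrite subrK mulr1.
rewrite /depth (shift_int _ _ MT); last 2 first.
- exact: measurable_hker2.
- by move=> p; exact: hker_bound.
by rewrite tonelli_mix /= mulr1.
Qed.

End main.

Lemma cvg_main (R : realType) (dX : measure_display) (X : measurableType dX)
  (dist : X -> X -> R)
  (Hmetric : is_metric dist) (Hsep : metric_separable dist) (Hborel : metric_borel dist)
  (P : probability X R) (mu z : X) :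
  IF_quotient dist mu P z @ 0^'+ -->
     fine (TT dist P mu) - fine (SS dist P z mu).
Proof.
set T := fine (TT dist P mu); set S := fine (SS dist P z mu).
set K := - (T / 2) + S - (hker dist z z mu + 2) / 2.
have E : \forall e \near 0^'+, T - S + e * K = IF_quotient dist mu P z e.
  near=> e.
  have e0 : 0 < e by near: e; exact: nbhs_right_gt.
  have e1 : e < 1 by near: e; apply: nbhs_right_lt; exact: ltr01.
  rewrite /IF_quotient depth_mix// ?(ltW e0) ?(ltW e1)// depthP//.
  rewrite /K -/T -/S; field.
  by rewrite gt_eqF.
apply: cvg_trans (near_eq_cvg E) _.
apply: cvg_at_right_filter.
rewrite -[X in _ --> X]addr0; apply: cvgD; first exact: cvg_cst.
rewrite -[X in _ --> X](mul0r K); apply: cvgMl; exact: cvg_id.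
Unshelve. all: by end_near.
Qed.

Theorem theorem2 (R : realType) (dX : measure_display) (X : measurableType dX)
  (dist : X -> X -> R)
  (Hmetric : is_metric dist) (Hcomplete : metric_complete dist)
  (Hsep : metric_separable dist) (Hborel : metric_borel dist)
  (P : probability X R) (mu z : X) :
  (IF_quotient dist mu P z @ 0^'+ -->
     2 - 2 * depth dist mu P - Eh_z dist P z mu) /\
  (forall z' : X, `|influence dist mu P z'| <= 4).
Proof.
split.
  rewrite depthP// EhP//.
  have -> : 2 - 2 * (1 - 2^-1 * (fine (TT dist P mu) - 2)) - (fine (SS dist P z mu) - 2)
     = fine (TT dist P mu) - fine (SS dist P z mu) by field.
  exact: cvg_main.
move=> z'; rewrite /influence (cvg_lim _ (@cvg_main _ _ _ dist Hmetric Hsep Hborel P mu z'))//.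
have /andP[t0 t4] := TT_bnd dist Hmetric Hsep Hborel P mu.
have /andP[s0 s4] := SS_bnd dist Hmetric Hborel P z' mu.
rewrite TT_fin// SS_fin// !lee_fin in t0 t4 s0 s4 *.
rewrite ler_norml; apply/andP; split; lra.
Qed.
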